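(* Let $\mathcal{S}$ be a finite set of states and, for each $s\in\mathcal{S}$, let $\mathcal{A}(s)$ be a finite nonempty set of actions. For logits $\theta=(\theta_{s,a})$ let $\pi_\theta(a\mid s)=\exp(\theta_{s,a})/\sum_{a'\in\mathcal{A}(s)}\exp(\theta_{s,a'})$. Fix old logits $\theta_{\mathrm{old}}$, current logits $\theta^k$, an advantage function $A:\{(s,a)\}\to\mathbb{R}$, weights $d(s)\ge 0$ (the state visitation distribution of $\pi_{\theta_{\mathrm{old}}}$), a learning rate $\eta>0$, $\epsilon\in(0,1)$ and $\delta>0$. Write $w_{s,a}(\theta)=\pi_\theta(a\mid s)/\pi_{\theta_{\mathrm{old}}}(a\mid s)$, and for $l<u$ let $$J^{l,u}(\theta)=\sum_{s\in\mathcal{S}} d(s)\sum_{a\in\mathcal{A}(s)}\pi_{\theta_{\mathrm{old}}}(a\mid s)\,\mathrm{clip}\big(w_{s,a}(\theta),l,u\big)\,A(s,a),$$ where $\mathrm{clip}(w,l,u)=\min(\max(w,l),u)$. Let $0<l_\delta<1<u_\delta$ be the two solutions of $w-1-\log w=\delta$. Define the one-step updates $$\theta^{\mathrm{ratio},k+1}=\theta^k+\eta\,\nabla_\theta J^{1-\epsilon,1+\epsilon}(\theta^k),\qquad \theta^{\mathrm{ATR},k+1}=\theta^k+\eta\,\nabla_\theta J^{l_\delta,u_\delta}(\theta^k),$$ and $\Delta\theta_{s,a}=\theta^{\mathrm{ATR},k+1}_{s,a}-\theta^{\mathrm{ratio},k+1}_{s,a}$. Assume that no ratio $w_{s,a}(\theta^k)$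 equals any of $1-\epsilon,\,1+\epsilon,\,l_\delta,\,u_\delta$. Fix $s\in\mathcal{S}$. (a) If $1+\epsilon=u_\delta$, let $X_-(s)=\{a\in\mathcal{A}(s): w_{s,a}(\theta^k)\in[1-\epsilon,\,l_\delta]\}$ with indicator $\mathbb{I}_{X_-(s)}$. Then for every $a\in\mathcal{A}(s)$, $$\Delta\theta_{s,a}=-\eta\, d(s)\,\pi_{\theta^k}(a\mid s)\Big[A(s,a)\mathbb{I}_{X_-(s)}(a)-\mathbb{E}_{a'\sim\pi_{\theta^k}(\cdot\mid s)}\big[A(s,a')\mathbb{I}_{X_-(s)}(a')\big]\Big].$$ (b) If $1-\epsilon=l_\delta$, let $X_+(s)=\{a\in\mathcal{A}(s): w_{s,a}(\theta^k)\in[1+\epsilon,\,u_\delta]\}$ with indicator $\mathbb{I}_{X_+(s)}$. Then for every $a\in\mathcal{A}(s)$, $$\Delta\theta_{s,a}=\eta\, d(s)\,\pi_{\theta^k}(a\mid s)\Big[A(s,a)\mathbb{I}_{X_+(s)}(a)-\mathbb{E}_{a'\sim\pi_{\theta^k}(\cdot\mid s)}\big[A(s,a')\mathbb{I}_{X_+(s)}(a')\big]\Big].$$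
   Context: This compares one full-batch policy-gradient step with a softmax (tabular) policy under symmetric ratio-based clipping of the likelihood ratio to $[1-\epsilon,1+\epsilon]$ (''ratio-based clipping'') versus clipping to $[l_\delta,u_\delta]$, the interval on which the KL3 estimator $w-1-\log w$ is at most $\delta$ (''ATR-based clipping''). *)

(* Defs.v *)
From HB Require Import structures.
From mathcomp Require Import all_boot all_order all_algebra.
From mathcomp Require Import all_classical all_reals all_analysis.
Set Implicit Arguments. Unset Strict Implicit. Unset Printing Implicit Defensive.
Import Order.TTheory GRing.Theory Num.Theory.
Local Open Scope ring_scope.

(* Logits th : S -> Act -> R
   (only the values on pairs (s,a) with a \in Aset s matter). *)

Section Defs.
Variables (R : realType) (S Act : finType) (Aset : S -> {set Act}).

Definition softpol (th : S -> Act -> R) (s : S) (a : Act) : R :=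
  expR (th s a) / \sum_(a' in Aset s) expR (th s a').

Definition lik_ratio (thold th : S -> Act -> R) (s : S) (a : Act) : R :=
  softpol th s a / softpol thold s a.

Definition clipR (w l u : R) : R := Num.min (Num.max w l) u.

Definition Jclip (d : S -> R) (Adv : S -> Act -> R) (thold : S -> Act -> R)
    (l u : R) (th : S -> Act -> R) : R :=
  \sum_(s : S) d s * \sum_(a in Aset s)
     softpol thold s a * clipR (lik_ratio thold th s a) l u * Adv s a.

Definition perturb (th : S -> Act -> R) (s : S) (a : Act) (t : R) : S -> Act -> R :=
  fun s' a' => th s' a' + (if (s' == s) && (a' == a) then t else 0).

Definition partialJ d Adv thold l u th s a : R :=
  derive1 (fun t : R => Jclip d Adv thold l u (perturb th s a t)) 0.

Definition update d Adv thold (eta l u : R) th s a : R :=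
  th s a + eta * partialJ d Adv thold l u th s a.

End Defs.

(* Main.v *)
Require Import Defs.
From HB Require Import structures.
From mathcomp Require Import all_boot all_order all_algebra.
From mathcomp Require Import all_classical all_reals all_analysis.
From mathcomp Require Import ring lra.
Import Order.TTheory GRing.Theory Num.Theory.
Import numFieldNormedType.Exports.
Local Open Scope ring_scope.
Set Implicit Arguments. Unset Strict Implicit. Unset Printing Implicit Defensive.
Section Ineq.
Variable R : realType.

Lemma is_derive_lin (x c : R) : is_derive x 1 (fun y => 1 + c * y) c.
Proof.
eapply is_derive_eq.
  eapply is_deriveD; first exact: is_derive_cst.
  eapply is_deriveM; [exact: is_derive_cst | exact: is_derive_id].
rewrite /= add0r scaler0 addr0; exact: mulr1.
Qed.

Lemma is_derive_ln1D (x c : R) : 0 < 1 + c * x ->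
  is_derive x 1 (fun y => ln (1 + c * y)) (c / (1 + c * x)).
Proof.
move=> hx.
have h2 : is_derive (1 + c * x) 1 (@ln R) (1 + c * x)^-1 by exact: is_derive1_ln.
have := @is_derive1_comp R (@ln R) (fun y => 1 + c * y) x _ _ h2 (is_derive_lin x c).
by rewrite mulrC.
Qed.

Lemma key_ineq (e : R) : 0 < e < 1 -> 2 * e < ln (1 + e) - ln (1 - e).
Proof.
move=> /andP[e0 e1].
pose g := fun x : R => ln (1 + 1 * x) - ln (1 + (-1) * x) - 2 * x.
have dg : forall x : R, x \in `]-1, 1[ -> is_derive x 1 g (1 / (1 + 1 * x) - (-1) / (1 + (-1) * x) - 2).
  move=> x; rewrite in_itv /= => /andP[x1 x2].
  eapply is_deriveB; last first.
    eapply is_derive_eq; first (eapply is_deriveM; [exact: is_derive_cst | exact: is_derive_id]).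
    rewrite /= scaler0 addr0; exact: mulr1.
  eapply is_deriveB; apply: is_derive_ln1D; lra.
have gc : forall a b : R, -1 <= a -> b <= 1 -> {in `]a, b[%classic, continuous g}.
  move=> a b ha hb x; rewrite inE /= in_itv /= => /andP[x1 x2].
  have /dg [dx _] : x \in `]-1, 1[ by rewrite in_itv /=; apply/andP; split; lra.
  exact/differentiable_continuous/derivable1_diffP.
have gd : forall x : R, -1 < x < 1 -> derive1 g x = 2 * x^+2 / ((1 + x) * (1 - x)).
  move=> x /andP[x1 x2].
  have /dg [_ dv] : x \in `]-1, 1[ by rewrite in_itv /=; apply/andP; split; lra.
  rewrite derive1E dv !mul1r !mulN1r.
  have h1 : 1 + x != 0 by apply: lt0r_neq0; lra.
  have h2 : 1 - x != 0 by apply: lt0r_neq0; lra.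
  by field; rewrite h1 h2.
have gdp : forall x : R, -1 < x < 1 -> 0 <= derive1 g x.
  move=> x hx; rewrite gd //; apply: divr_ge0; first by apply: mulr_ge0 => //; apply: sqr_ge0.
  apply: mulr_ge0; lra.
have H1 := @ger0_derive1_le_oo R g (-1) 1 _ _ (gc _ _ (lexx _) (lexx _)) 0 (e/2).
have H2 := @gtr0_derive1_lt_oo R g 0 1 _ _ (gc _ _ _ (lexx _)) (e/2) e.
suff : g 0 < g e by rewrite /g !mulr0 !addr0 ln1 !subr0 !mul1r !mulN1r; lra.
apply: (le_lt_trans (y := g (e/2))).
  apply: H1; rewrite ?in_itv /=; try (apply/andP; split); try lra.
  - move=> x; rewrite in_itv /= => hx; by have /dg [] := hx.
  - by move=> x; rewrite in_itv /= => hx; apply: gdp.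
apply: H2; rewrite ?in_itv /=; try (apply/andP; split); try lra.
- move=> x; rewrite in_itv /= => /andP[x1 x2].
  have /dg [] // : x \in `]-1, 1[ by rewrite in_itv /=; apply/andP; split; lra.
- move=> x; rewrite in_itv /= => /andP[x1 x2]; rewrite gd; last by apply/andP; split; lra.
  apply: divr_gt0; first by apply: mulr_gt0 => //; apply: exprn_gt0.
  apply: mulr_gt0; lra.
Qed.
End Ineq.
Section Ineq2.
Variable R : realType.

Lemma ln_le_sub1 (y : R) : 0 < y -> ln y <= y - 1.
Proof.
move=> y0; have := @le_ln1Dx R (y - 1); rewrite addrCA subrr addr0; apply; lra.
Qed.

Lemma ln_ge_1V (y : R) : 0 < y -> 1 - y^-1 <= ln y.
Proof.
move=> y0; have := @ln_le_sub1 y^-1 (ltac:(by rewrite invr_gt0)).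
rewrite lnV ?posrE //; lra.
Qed.

Lemma order_a (eps ld delta : R) : 0 < eps < 1 -> 0 < ld < 1 ->
  ld - 1 - ln ld = delta -> (1 + eps) - 1 - ln (1 + eps) = delta -> 1 - eps < ld.
Proof.
move=> /andP[e0 e1] /andP[l0 l1] hl hu.
rewrite ltNge; apply/negP => hle.
have K := @key_ineq R eps (ltac:(apply/andP; split => //)).
set a := 1 - eps.
have a0 : 0 < a by rewrite /a; lra.
have := @ln_ge_1V (a / ld) (divr_gt0 a0 l0).
rewrite ln_div ?posrE // invf_div.
set q := ld / a.
have qa : q * a = ld by rewrite /q divfK // gt_eqF.
have q1 : q <= 1 by rewrite /q ler_pdivrMr // mul1r.
move=> H.
have : a - ld <= 1 - q by rewrite -qa; nra.
rewrite /a; lra.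
Qed.

Lemma order_b (eps ud delta : R) : 0 < eps < 1 -> 1 < ud ->
  (1 - eps) - 1 - ln (1 - eps) = delta -> ud - 1 - ln ud = delta -> 1 + eps < ud.
Proof.
move=> /andP[e0 e1] u1 hl hu.
rewrite ltNge; apply/negP => hle.
have K := @key_ineq R eps (ltac:(apply/andP; split => //)).
set b := 1 + eps.
have b0 : 0 < b by rewrite /b; lra.
have u0 : 0 < ud by lra.
have := @ln_le_sub1 (b / ud) (divr_gt0 b0 u0).
rewrite ln_div ?posrE //.
set q := b / ud.
have qa : q * ud = b by rewrite /q divfK // gt_eqF.
have q1 : 1 <= q by rewrite /q ler_pdivlMr // mul1r.
move=> H.
have : q - 1 <= b - ud by rewrite -qa; nra.
rewrite /b; lra.
Qed.
End Ineq2.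
Section Deriv.
Variable R : realType.

Lemma is_derive_bsum (I : finType) (P : pred I) (h : I -> R -> R) (dh : I -> R) (x : R) :
  (forall i, P i -> is_derive x 1 (h i) (dh i)) ->
  is_derive x 1 (fun t => \sum_(i | P i) h i t) (\sum_(i | P i) dh i).
Proof.
move=> H; rewrite -(@fct_sumE I R R (index_enum I) P h).
elim/big_rec2: _ => [|i y f Pi IH].
  exact: is_derive_cst.
eapply is_derive_eq; first (eapply is_deriveD; [exact: H | exact: IH]).
by [].
Qed.

Lemma is_derive_clip (f : R -> R) (x df l u : R) : l < u -> f x != l -> f x != u ->
  is_derive x 1 f df ->
  is_derive x 1 (fun t => clipR (f t) l u) (if l < f x < u then df else 0).
Proof.
move=> lu fl fu fd.
have fc : {for x, continuous f}.
  by case: fd => dx _; exact/differentiable_continuous/derivable1_diffP.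
have [flo|fhi] := ltP (f x) l.
  have near1 : \forall z \near f x, z \in `]-oo, l[ by apply: near_in_itvNyo; rewrite in_itv.
  have nx : \forall t \near x, f t \in `]-oo, l[ := fc _ near1.
  have -> : (l < f x < u) = false by apply/negbTE; rewrite negb_and -leNgt ltW.
  apply: (near_eq_is_derive _ (is_derive_cst (clipR (f x) l u) x 1)).
  near=> t; have : f t \in `]-oo, l[ by near: t; exact: nx.
  rewrite in_itv /= => ht.
  by rewrite /clipR (max_r (ltW flo)) (max_r (ltW ht)).
have [fup|flu] := ltP (f x) u.
  have fl' : l < f x by rewrite lt_neqAle eq_sym fl fhi.
  have near1 : \forall z \near f x, z \in `]l, u[ by apply: near_in_itvoo; rewrite in_itv /= fl' fup.
  have nx : \forall t \near x, f t \in `]l, u[ := fc _ near1.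
  rewrite fl' /=.
  apply: (near_eq_is_derive _ fd).
  near=> t; have : f t \in `]l, u[ by near: t; exact: nx.
  rewrite in_itv /= => /andP[h1 h2].
  by rewrite /clipR (max_l (ltW h1)) (min_l (ltW h2)).
have fu' : u < f x by rewrite lt_neqAle eq_sym fu flu.
have near1 : \forall z \near f x, z \in `]u, +oo[ by apply: near_in_itvoy; rewrite in_itv /= fu'.
have nx : \forall t \near x, f t \in `]u, +oo[ := fc _ near1.
rewrite andbF.
apply: (near_eq_is_derive _ (is_derive_cst (clipR (f x) l u) x 1)).
near=> t; have : f t \in `]u, +oo[ by near: t; exact: nx.
rewrite in_itv /= andbT => ht.
by rewrite /clipR (max_l (ltW (lt_trans lu ht))) (max_l (ltW (lt_trans lu fu'))) (min_r (ltW ht)) (min_r (ltW fu')).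
Unshelve. all: by end_near. Qed.
End Deriv.
Section Soft.
Variables (R : realType) (S Act : finType) (Aset : S -> {set Act}) (thk : S -> Act -> R) (s : S) (a : Act).
Hypothesis aA : a \in Aset s.

Definition Nf b (t : R) := expR (thk s b) * (if b == a then expR t else 1).
Definition Zf (t : R) := \sum_(b in Aset s) Nf b t.

Lemma soft_pert t b : softpol Aset (perturb thk s a t) s b = Nf b t / Zf t.
Proof.
rewrite /softpol /perturb /Zf /Nf eqxx /=; congr (_ / _).
  by case: ifP => _; rewrite expRD ?expR0.
by apply: eq_bigr => b' _; case: ifP => _; rewrite expRD ?expR0.
Qed.

Lemma soft_pert_other t s' b : s' != s -> softpol Aset (perturb thk s a t) s' b = softpol Aset thk s' b.
Proof.
move=> /negbTE ns; rewrite /softpol /perturb ns /= addr0; congr (_ / _).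
by apply: eq_bigr => b' _; rewrite addr0.
Qed.

Lemma Nf_gt0 b t : 0 < Nf b t.
Proof. by rewrite /Nf; case: ifP => _; rewrite ?mulr1 ?mulr_gt0 ?expR_gt0. Qed.

Lemma Zf_gt0 t : 0 < Zf t.
Proof.
rewrite /Zf (bigD1 a) //=.
have h1 := Nf_gt0 a t.
have h2 : 0 <= \sum_(i in Aset s | i != a) Nf i t by apply: sumr_ge0 => i _; exact/ltW/Nf_gt0.
lra.
Qed.

Lemma soft0 b : softpol Aset thk s b = Nf b 0 / Zf 0.
Proof.
rewrite -soft_pert; congr softpol; apply/funext => s'; apply/funext => b'.
by rewrite /perturb; case: andP; rewrite addr0.
Qed.

Lemma dNf b : is_derive (0:R) 1 (Nf b) (expR (thk s b) * (b == a)%:R).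
Proof.
rewrite /Nf; case: (b == a).
  eapply is_derive_eq.
    eapply is_deriveM; [exact: is_derive_cst | exact: is_derive_expR].
  by rewrite /= expR0 scaler0 addr0 mulr1 /GRing.scale /= mulr1.
eapply is_derive_eq; first exact: is_derive_cst.
by rewrite mulr0.
Qed.

Lemma dsoft b : is_derive (0:R) 1 (fun t => Nf b t / Zf t)
   (softpol Aset thk s b * ((b == a)%:R - softpol Aset thk s a)).
Proof.
have dZ : is_derive (0:R) 1 Zf (\sum_(b in Aset s) expR (thk s b) * (b == a)%:R).
  rewrite /Zf; apply: is_derive_bsum => i _; exact: dNf.
have Z0 : Zf 0 != 0 by apply: lt0r_neq0; exact: Zf_gt0.
eapply is_derive_eq.
  eapply is_deriveM; [exact: dNf | eapply is_deriveV; [exact: Z0 | exact: dZ]].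
rewrite (bigD1 a) //= eqxx big1 => [|b' /andP[_ /negbTE ->]]; last by rewrite mulr0.
rewrite !soft0 /Nf /= eqxx expR0 !mulr1 if_same addr0 /GRing.scale /=.
by field.
Qed.
End Soft.
Section Helpers.
Variable R : realType.
Lemma is_deriveMl (c : R) (f : R -> R) (x df : R) :
  is_derive x 1 f df -> is_derive x 1 (fun t => c * f t) (c * df).
Proof.
move=> h; eapply is_derive_eq.
  eapply is_deriveM; [exact: is_derive_cst | exact: h].
by rewrite scaler0 addr0.
Qed.
Lemma is_deriveMr (c : R) (f : R -> R) (x df : R) :
  is_derive x 1 f df -> is_derive x 1 (fun t => f t * c) (df * c).
Proof.
move=> h; eapply is_derive_eq.
  eapply is_deriveM; [exact: h | exact: is_derive_cst].
by rewrite scaler0 add0r /GRing.scale /= mulrC.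
Qed.
End Helpers.

Section Main.
Variables (R : realType) (S Act : finType) (Aset : S -> {set Act}).
Variables (thold thk : S -> Act -> R) (Adv : S -> Act -> R) (d : S -> R) (s : S) (a : Act).
Hypothesis aA : a \in Aset s.

Lemma softpol_gt0 (th : S -> Act -> R) (s' : S) (b : Act) : b \in Aset s' -> 0 < softpol Aset th s' b.
Proof.
move=> bA; rewrite /softpol divr_gt0 ?expR_gt0 //.
rewrite (bigD1 b) //=.
have h1 := expR_gt0 (th s' b).
have h2 : 0 <= \sum_(i in Aset s' | i != b) expR (th s' i) by apply: sumr_ge0 => i _; exact/ltW/expR_gt0.
lra.
Qed.

Definition Dpart (l u : R) :=
  d s * \sum_(b in Aset s) softpol Aset thold s b *
     (if l < lik_ratio Aset thold thk s b < u then
        softpol Aset thk s b * ((b == a)%:R - softpol Aset thk s a) / softpol Aset thold s b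
      else 0) * Adv s b.

Lemma dJ (l u : R) : l < u ->
  (forall b, b \in Aset s -> lik_ratio Aset thold thk s b != l /\ lik_ratio Aset thold thk s b != u) ->
  is_derive (0:R) 1 (fun t => Jclip Aset d Adv thold l u (perturb thk s a t)) (Dpart l u).
Proof.
move=> lu hb.
rewrite /Jclip.
have -> : Dpart l u = \sum_(s' : S) (if s' == s then Dpart l u else 0).
  by rewrite (bigD1 s) //= eqxx big1 ?addr0 // => s' /negbTE ->.
apply: is_derive_bsum => s' _.
case: eqP => [->|/eqP ns].
  apply: is_deriveMl; apply: is_derive_bsum => b bA.
  apply: is_deriveMr; apply: is_deriveMl.
  have wd : is_derive (0:R) 1 (fun t => lik_ratio Aset thold (perturb thk s a t) s b)
      (softpol Aset thk s b * ((b == a)%:R - softpol Aset thk s a) / softpol Aset thold s b).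
    have -> : (fun t => lik_ratio Aset thold (perturb thk s a t) s b) =
              (fun t => Nf thk s a b t / Zf Aset thk s a t * (softpol Aset thold s b)^-1).
      by apply/funext => t; rewrite /lik_ratio soft_pert.
    exact: is_deriveMr (dsoft _ aA b).
  have := hb b bA; rewrite /lik_ratio => -[h1 h2].
  have P0 : perturb thk s a 0 = thk.
    by apply/funext=> s''; apply/funext => b'; rewrite /perturb if_same addr0.
  have := is_derive_clip lu _ _ wd.
  by rewrite P0 /lik_ratio; apply.
have -> : (fun t : R => d s' * \sum_(b in Aset s') softpol Aset thold s' b *
       clipR (lik_ratio Aset thold (perturb thk s a t) s' b) l u * Adv s' b) =
   cst (d s' * \sum_(b in Aset s') softpol Aset thold s' b *
       clipR (lik_ratio Aset thold thk s' b) l u * Adv s' b).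
  apply/funext => t /=; congr (_ * _); apply: eq_bigr => b _.
  by rewrite /lik_ratio soft_pert_other.
exact: is_derive_cst.
Qed.

Lemma Dpart_eq (l u : R) : Dpart l u = d s * \sum_(b in Aset s)
   (if l < lik_ratio Aset thold thk s b < u then 1 else 0) *
   (softpol Aset thk s b * ((b == a)%:R - softpol Aset thk s a)) * Adv s b.
Proof.
rewrite /Dpart; congr (_ * _); apply: eq_bigr => b bA; case: ifP => _; last by rewrite !mulr0 !mul0r.
have h := softpol_gt0 thold bA.
by field; rewrite gt_eqF.
Qed.
End Main.
Section Final.
Variable R : realType.

Lemma ind_a (x l1 l2 u : R) : l1 < l2 -> l2 < u -> x != l1 -> x != l2 -> x != u ->
  (if l2 < x < u then 1 else 0) - (if l1 < x < u then 1 else 0)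
   = - (if l1 <= x <= l2 then 1 else 0) :> R.
Proof.
move=> h12 h2u; rewrite !neq_lt => /orP[] ? /orP[] ? /orP[] ?;
repeat (case: ifP => [/andP[? ?]|/negbT/nandP[] ?]);
repeat match goal with H : is_true (~~ (_ < _)) |- _ => rewrite -leNgt in H
  | H : is_true (~~ (_ <= _)) |- _ => rewrite -ltNge in H end; lra.
Qed.

Lemma ind_b (x l u1 u2 : R) : l < u1 -> u1 < u2 -> x != l -> x != u1 -> x != u2 ->
  (if l < x < u2 then 1 else 0) - (if l < x < u1 then 1 else 0)
   = (if u1 <= x <= u2 then 1 else 0) :> R.
Proof.
move=> h12 h2u; rewrite !neq_lt => /orP[] ? /orP[] ? /orP[] ?;
repeat (case: ifP => [/andP[? ?]|/negbT/nandP[] ?]);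
repeat match goal with H : is_true (~~ (_ < _)) |- _ => rewrite -leNgt in H
  | H : is_true (~~ (_ <= _)) |- _ => rewrite -ltNge in H end; lra.
Qed.

Lemma sum_ident (Act : finType) (A : {set Act}) (a : Act) (p c Ad : Act -> R) :
  a \in A ->
  \sum_(b in A) c b * (p b * ((b == a)%:R - p a)) * Ad b
   = p a * (Ad a * c a - \sum_(b in A) p b * (Ad b * c b)).
Proof.
move=> aA.
have -> : \sum_(b in A) c b * (p b * ((b == a)%:R - p a)) * Ad b
   = \sum_(b in A) c b * p b * (b == a)%:R * Ad b - p a * \sum_(b in A) p b * (Ad b * c b).
  rewrite mulr_sumr -sumrB; apply: eq_bigr => b _; ring.
rewrite (bigD1 a) //= eqxx big1 => [|b /andP[_ /negbTE ->]]; last by rewrite mulr0 mul0r.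
rewrite addr0 mulr1; set T := \sum_(b in A) _; ring.
Qed.
End Final.
Unset Implicit Arguments.
Theorem theorem3 (R : realType) (S Act : finType) (Aset : S -> {set Act})
  (thold thk : S -> Act -> R) (Adv : S -> Act -> R) (d : S -> R)
  (eta eps delta ld ud : R) :
  (forall s, (0 < #|Aset s|)%N) ->
  (forall s, 0 <= d s) ->
  0 < eta -> 0 < eps < 1 -> 0 < delta ->
  0 < ld < 1 -> 1 < ud ->
  ld - 1 - ln ld = delta -> ud - 1 - ln ud = delta ->
  (forall s a, a \in Aset s ->
     lik_ratio Aset thold thk s a \notin [:: 1 - eps; 1 + eps; ld; ud]) ->
  forall s : S,
  let w := lik_ratio Aset thold thk s in
  let Delta := fun a => update Aset d Adv thold eta ld ud thk s a
                      - update Aset d Adv thold eta (1 - eps) (1 + eps) thk s a in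
  (* gradients exist (partial derivatives along each coordinate (s,a)) *)
  (forall a, a \in Aset s ->
     derivable (fun t : R => Jclip Aset d Adv thold ld ud (perturb thk s a t)) 0 1 /\
     derivable (fun t : R => Jclip Aset d Adv thold (1 - eps) (1 + eps) (perturb thk s a t)) 0 1) /\
  (* (a) *)
  (1 + eps = ud ->
    let I := fun a : Act => if (a \in Aset s) && (1 - eps <= w a <= ld) then 1 else 0 in
    forall a, a \in Aset s ->
      Delta a = - eta * d s * softpol Aset thk s a *
        (Adv s a * I a - \sum_(a' in Aset s) softpol Aset thk s a' * (Adv s a' * I a'))) /\
  (* (b) *)
  (1 - eps = ld ->
    let I := fun a : Act => if (a \in Aset s) && (1 + eps <= w a <= ud) then 1 else 0 in
    forall a, a \in Aset s ->
      Delta a = eta * d s * softpol Aset thk s a *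
        (Adv s a * I a - \sum_(a' in Aset s) softpol Aset thk s a' * (Adv s a' * I a'))).
Proof.
move=> hne hd eta0 /andP[e0 e1] hdel /andP[l0 l1] u1 hl hu hnot s w Delta.
have nb : forall b, b \in Aset s ->
    [/\ w b != 1 - eps, w b != 1 + eps, w b != ld & w b != ud].
  move=> b bA; have := hnot s b bA.
  by rewrite !in_cons in_nil orbF !negb_or => /and4P[].
have dA : forall a, a \in Aset s ->
    is_derive (0:R) 1 (fun t => Jclip Aset d Adv thold ld ud (perturb thk s a t))
      (Dpart Aset thold thk Adv d s a ld ud).
  move=> a aA; apply: dJ => //; first lra.
  by move=> b bA; have [? ? ? ?] := nb b bA.
have dR : forall a, a \in Aset s ->
    is_derive (0:R) 1 (fun t => Jclip Aset d Adv thold (1 - eps) (1 + eps) (perturb thk s a t))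
      (Dpart Aset thold thk Adv d s a (1 - eps) (1 + eps)).
  move=> a aA; apply: dJ => //; first lra.
  by move=> b bA; have [? ? ? ?] := nb b bA.
have DeltaE : forall a, a \in Aset s -> Delta a =
    eta * (Dpart Aset thold thk Adv d s a ld ud - Dpart Aset thold thk Adv d s a (1 - eps) (1 + eps)).
  move=> a aA; rewrite /Delta /update /partialJ !derive1E.
  case: (dA a aA) => _ ->; case: (dR a aA) => _ ->; ring.
split.
  by move=> a aA; split; [case: (dA a aA) | case: (dR a aA)].
split.
- move=> hu1 I a aA.
  have ord : 1 - eps < ld.
    apply: (@order_a R eps ld delta); rewrite ?e0 ?e1 ?l0 ?l1 //.
    by rewrite hu1.
  rewrite DeltaE // !Dpart_eq -mulrBr -hu1.
  have -> : \sum_(b in Aset s) (if ld < lik_ratio Aset thold thk s b < 1 + eps then 1 else 0) *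
        (softpol Aset thk s b * ((b == a)%:R - softpol Aset thk s a)) * Adv s b -
      \sum_(b in Aset s) (if 1 - eps < lik_ratio Aset thold thk s b < 1 + eps then 1 else 0) *
        (softpol Aset thk s b * ((b == a)%:R - softpol Aset thk s a)) * Adv s b
    = - \sum_(b in Aset s) I b * (softpol Aset thk s b * ((b == a)%:R - softpol Aset thk s a)) * Adv s b.
    rewrite -sumrB -sumrN; apply: eq_bigr => b bA.
    have [n1 n2 n3 n4] := nb b bA.
    rewrite -hu1 in n4.
    have H := @ind_a R (w b) (1 - eps) ld (1 + eps) ord ltac:(lra) n1 n3 n2.
    by rewrite -mulrBl -mulrBl /w in H *; rewrite H /I bA /= /w ?mulNr.
  rewrite (@sum_ident R Act (Aset s) a (softpol Aset thk s) I (Adv s) aA); ring.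
- move=> hl1 I a aA.
  have ord : 1 + eps < ud.
    apply: (@order_b R eps ud delta); rewrite ?e0 ?e1 ?u1 //.
    by rewrite hl1.
  rewrite DeltaE // !Dpart_eq -mulrBr -hl1.
  have -> : \sum_(b in Aset s) (if 1 - eps < lik_ratio Aset thold thk s b < ud then 1 else 0) *
        (softpol Aset thk s b * ((b == a)%:R - softpol Aset thk s a)) * Adv s b -
      \sum_(b in Aset s) (if 1 - eps < lik_ratio Aset thold thk s b < 1 + eps then 1 else 0) *
        (softpol Aset thk s b * ((b == a)%:R - softpol Aset thk s a)) * Adv s b
    = \sum_(b in Aset s) I b * (softpol Aset thk s b * ((b == a)%:R - softpol Aset thk s a)) * Adv s b.
    rewrite -sumrB; apply: eq_bigr => b bA.
    have [n1 n2 n3 n4] := nb b bA.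
    have H := @ind_b R (w b) (1 - eps) (1 + eps) ud ltac:(lra) ord n1 n2 n4.
    by rewrite -mulrBl -mulrBl /w in H *; rewrite H /I bA /= /w ?mulNr.
  rewrite (@sum_ident R Act (Aset s) a (softpol Aset thk s) I (Adv s) aA); ring.
Qed.
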